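(* Let $(A,G)$ be an admissible pair with $A\in M_{Q_0}(\mathbb Z)$, and assume that $G$ has at most one non-trivial orbit in $Q_0$. Then $(A,G)$ is a stable admissible pair.
   Context: $Q_0$ finite; $A=(a_{ij})$ skew-symmetrizable ($DA$ skew-symmetric for a positive integer diagonal $D$). Mutation $\mu_k(B)=(b'_{ij})$: $b'_{ij}=-b_{ij}$ if $k\in\{i,j\}$, else $b_{ij}+\tfrac12(|b_{ik}|b_{kj}+b_{ik}|b_{kj}|)$. A permutation $g$ of $Q_0$ is an automorphism of $B$ if $b_{gi,gj}=b_{ij}$; a group $G$ of automorphisms of $B$ is admissible ($(B,G)$ an admissible pair) if for distinct $i,j$ in the same $G$-orbit there is no path of length $1$ or $2$ from $i$ to $j$ in the quiver of $B$ ($b_{ij}\le0$ and no $k$ with $b_{ik}>0$, $b_{kj}>0$). For a $G$-orbit $\mathbf i$, $\mu^G_{\mathbf i}=\prod_{j\in\mathbf i}\mu_j$. $(A,G)$ is stable if for every finite sequence of $G$-orbits $\mathbf i_1,\ldots,\mathbf i_n$, each pair $(\mu^G_{\mathbf i_m}\circ\cdots\circ\mu^G_{\mathbf i_1}(A),G)$, $1\le m\le n$, is admissible. *)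

(* Defs.v *)
From HB Require Import structures.
From mathcomp Require Import all_boot all_order all_fingroup all_algebra.
Set Implicit Arguments. Unset Strict Implicit. Unset Printing Implicit Defensive.
Import Order.TTheory GRing.Theory Num.Theory.
Local Open Scope ring_scope.

Definition qmat (Q : finType) := Q -> Q -> int.

Definition skew_symmetrizable (Q : finType) (A : qmat Q) : Prop :=
  exists d : Q -> nat, (forall i, (0 < d i)%N) /\
    forall i j, (d i)%:Z * A i j = - ((d j)%:Z * A j i).

(* Matrix mutation mu_k. The quantity |b_ik| b_kj + b_ik |b_kj| is always
   even, so the exact division by 2 is an integer division. *)
Definition mutate (Q : finType) (k : Q) (B : qmat Q) : qmat Q :=
  fun i j => if (i == k) || (j == k) then - B i j
             else B i j + ((`|B i k| * B k j + B i k * `|B k j|) %/ 2)%Z.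

Definition gorbit (Q : finType) (G : {group {perm Q}}) (i : Q) : {set Q} :=
  [set (g : {perm Q}) i | g in G].

Definition is_aut (Q : finType) (B : qmat Q) (g : {perm Q}) : Prop :=
  forall i j, B (g i) (g j) = B i j.

Definition admissible (Q : finType) (B : qmat Q) (G : {group {perm Q}}) : Prop :=
  (forall g, g \in G -> is_aut B g) /\
  (forall i j, j \in gorbit G i -> i != j ->
     B i j <= 0 /\ ~ (exists k, 0 < B i k /\ 0 < B k j)).

Definition orbit_mutate (Q : finType) (o : {set Q}) (B : qmat Q) : qmat Q :=
  foldr (fun j B' => mutate j B') B (enum o).

Definition orbit_mutate_seq (Q : finType) (s : seq {set Q}) (B : qmat Q) : qmat Q :=
  foldl (fun B' o => orbit_mutate o B') B s.

Definition is_gorbit (Q : finType) (G : {group {perm Q}}) (o : {set Q}) : Prop :=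
  exists i, o = gorbit G i.

Definition stable (Q : finType) (A : qmat Q) (G : {group {perm Q}}) : Prop :=
  forall s : seq {set Q}, (forall o, o \in s -> is_gorbit G o) ->
    forall m : nat, (1 <= m <= size s)%N ->
      admissible (orbit_mutate_seq (take m s) A) G.

Definition at_most_one_nontrivial_orbit (Q : finType) (G : {group {perm Q}}) : Prop :=
  forall i j, (1 < #|gorbit G i|)%N -> (1 < #|gorbit G j|)%N -> gorbit G i = gorbit G j.

(* Main.v *)
Require Import Defs.
From mathcomp Require Import all_boot all_order all_fingroup all_algebra.
From mathcomp Require Import ring lra zify.
Set Implicit Arguments. Unset Strict Implicit. Unset Printing Implicit Defensive.
Import Order.TTheory GRing.Theory Num.Theory.
Local Open Scope ring_scope.

Definition fm (x y : int) : int := ((`|x| * y + x * `|y|) %/ 2)%Z.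

Lemma mutateE (Q : finType) (k : Q) B i j : mutate k B i j =
  if (i == k) || (j == k) then - B i j else B i j + fm (B i k) (B k j).
Proof. by []. Qed.

Lemma fm_even x y : `|x| * y + x * `|y| = fm x y * 2.
Proof.
have [c E] : exists c, `|x| * y + x * `|y| = c * 2.
  case: (lerP 0 x) => hx; case: (lerP 0 y) => hy;
    [exists (x * y) | exists 0 | exists 0 | exists (- (x * y))]; nia.
by rewrite /fm E mulzK.
Qed.

Lemma fm0 x y : x * y <= 0 -> fm x y = 0.
Proof.
move=> h; have E : `|x| * y + x * `|y| = 0 by nia.
by rewrite /fm E div0z.
Qed.

Lemma fm0l y : fm 0 y = 0. Proof. by apply: fm0; rewrite mul0r. Qed.
Lemma fm0r y : fm y 0 = 0. Proof. by apply: fm0; rewrite mulr0. Qed.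

Section S.
Variable Q : finType.
Variable d : Q -> nat.
Hypothesis dpos : forall i, (0 < d i)%N.

Definition skewd (B : qmat Q) := forall i j, (d i)%:Z * B i j = - ((d j)%:Z * B j i).

Lemma skew_sign B i j : skewd B -> B i j * B j i <= 0.
Proof.
move=> H; have := H i j; have := dpos i; have := dpos j.
have e : (d i)%:Z * (d j)%:Z * (B i j * B j i) = - ((d j)%:Z * B j i) ^+ 2.
  have -> : (d i)%:Z * (d j)%:Z * (B i j * B j i) = ((d i)%:Z * B i j) * ((d j)%:Z * B j i) by ring.
  by rewrite H expr2 mulNr.
nia.
Qed.

Lemma skew_diag B i : skewd B -> B i i = 0.
Proof. move=> H; have := H i i; have := dpos i; nia. Qed.

Lemma mutate_skew B k : skewd B -> skewd (mutate k B).
Proof.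
move=> H i j; rewrite !mutateE.
case: (boolP ((i == k) || (j == k))) => h.
  by rewrite orbC h !mulrN H.
rewrite orbC (negbTE h) !mulrDr opprD H; congr (_ + _).
apply: (@mulIf _ 2) => //.
rewrite -mulrA -fm_even mulNr -mulrA -fm_even.
have H1 := H i k; have H2 := H k j.
have A1 : (d i)%:Z * `|B i k| = (d k)%:Z * `|B k i|.
  have := congr1 (fun t => `|t|) H1; rewrite /= normrN !normrM.
  lia.
have A2 : (d k)%:Z * `|B k j| = (d j)%:Z * `|B j k|.
  have := congr1 (fun t => `|t|) H2; rewrite /= normrN !normrM.
  lia.
have h1 := congr1 (fun t => t * `|B k j|) H1.
have h2 := congr1 (fun t => t * `|B k i|) H2.
have h3 := congr1 (fun t => t * B k j) A1.
have h4 := congr1 (fun t => t * B k i) A2.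
simpl in *.
lia.
Qed.

Lemma foldr_skew B s : skewd B -> skewd (foldr (fun j B' => mutate j B') B s).
Proof. by elim: s => //= k s IH H; apply: mutate_skew; apply: IH. Qed.

End S.

Lemma foldr_mutateE (Q : finType) (s : seq Q) (B : qmat Q) :
  uniq s -> (forall k l, k \in s -> l \in s -> B k l = 0) ->
  forall i j, foldr (fun j B' => mutate j B') B s i j =
    if (i \in s) || (j \in s) then - B i j
    else B i j + \sum_(k <- s) fm (B i k) (B k j).
Proof.
elim: s => [|k s IH] /=.
  by move=> _ _ i j; rewrite big_nil addr0.
move=> /andP[ks us] Z.
have Z' : forall k l, k \in s -> l \in s -> B k l = 0.
  by move=> a b ha hb; apply: Z; rewrite inE ?ha ?hb orbT.
have Zk : forall l, l \in s -> B k l = 0 /\ B l k = 0.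
  by move=> l hl; split; apply: Z; rewrite inE ?hl ?eqxx ?orbT.
move=> i j; rewrite mutateE !IH // !inE big_cons.
have S1 : forall a, \sum_(l <- s) fm (B k l) (B l a) = 0.
  move=> a; apply: big1_seq => l /andP[_ hl]; by rewrite (Zk l hl).1 fm0l.
have S2 : forall a, \sum_(l <- s) fm (B a l) (B l k) = 0.
  move=> a; apply: big1_seq => l /andP[_ hl]; by rewrite (Zk l hl).2 fm0r.
case: (eqVneq i k) => [->|ik] /=.
  rewrite (negbTE ks) /=.
  case js: (j \in s) => /=.
    by rewrite (Zk j js).1 !oppr0.
  by rewrite S1 addr0.
case: (eqVneq j k) => [->|jk] /=.
  rewrite (negbTE ks) orbF /=.
  case is_: (i \in s) => /=.
    by rewrite (Zk i is_).2 !oppr0.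
  by rewrite S2 addr0.
rewrite (negbTE ks) /= S1 S2 !addr0.
case is_: (i \in s) => /=.
  by rewrite (Zk i is_).2 oppr0 fm0l addr0.
case js: (j \in s) => /=.
  by rewrite (Zk j js).1 oppr0 fm0r addr0.
by rewrite -!addrA [X in _ + X = _]addrC.
Qed.

Lemma orbit_mutateE (Q : finType) (o : {set Q}) (B : qmat Q) :
  (forall k l, k \in o -> l \in o -> B k l = 0) ->
  forall i j, orbit_mutate o B i j =
    if (i \in o) || (j \in o) then - B i j
    else B i j + \sum_(k in o) fm (B i k) (B k j).
Proof.
move=> Z i j; rewrite /orbit_mutate foldr_mutateE ?enum_uniq //.
  by rewrite !mem_enum big_enum.
by move=> k l; rewrite !mem_enum; apply: Z.
Qed.

Section Orb.
Variable Q : finType.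
Variable G : {group {perm Q}}.

Lemma orb_self i : i \in gorbit G i.
Proof. by apply/imsetP; exists 1%g; rewrite ?group1 ?perm1. Qed.

Lemma orb_act g i j : g \in G -> j \in gorbit G i -> g j \in gorbit G i.
Proof.
move=> gG /imsetP[h hG ->]; apply/imsetP; exists (h * g)%g.
  exact: groupM.
by rewrite permM.
Qed.

Lemma orb_actE g i j : g \in G -> (g j \in gorbit G i) = (j \in gorbit G i).
Proof.
move=> gG; apply/idP/idP; last exact: orb_act.
by move/(orb_act (groupVr gG)); rewrite -permM mulgV perm1.
Qed.

Lemma orb_sym i j : j \in gorbit G i -> i \in gorbit G j.
Proof.
case/imsetP => h hG ->; apply/imsetP; exists h^-1%g; first exact: groupVr.
by rewrite -permM mulgV perm1.
Qed.

Lemma orb_trans i j k : j \in gorbit G i -> k \in gorbit G j -> k \in gorbit G i.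
Proof.
case/imsetP => h hG -> /imsetP[h' hG' ->]; apply/imsetP; exists (h * h')%g.
  exact: groupM.
by rewrite permM.
Qed.

Lemma orb_fixed x g k : (#|gorbit G x| <= 1)%N -> g \in G -> k \in gorbit G x ->
  k = x /\ g x = x.
Proof.
move=> /card_le1_eqP h gG kx; split.
  exact: esym (h k x kx (orb_self x)).
have gx : g x \in gorbit G x by apply/imsetP; exists g.
exact: esym (h (g x) x gx (orb_self x)).
Qed.

End Orb.

Definition Inv (Q : finType) (d : Q -> nat) (B : qmat Q) (G : {group {perm Q}}) :=
  skewd d B /\ (forall g, g \in G -> is_aut B g) /\
  (forall i j, j \in gorbit G i -> B i j = 0).

Lemma Inv_mut (Q : finType) (d : Q -> nat) (G : {group {perm Q}}) B x :
  (forall i, (0 < d i)%N) -> at_most_one_nontrivial_orbit G -> Inv d B G ->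
  Inv d (orbit_mutate (gorbit G x) B) G.
Proof.
move=> dpos amo [Sk [Au Ze]].
set o := gorbit G x.
have Z : forall k l, k \in o -> l \in o -> B k l = 0.
  move=> k l ko lo; apply: Ze; apply: orb_trans (orb_sym ko) lo.
split; [|split].
- exact: foldr_skew.
- move=> g gG i j; rewrite !(orbit_mutateE Z) !orb_actE // (Au g gG).
  case: ifP => // _; congr (_ + _).
  rewrite [X in X = _](reindex_inj (h := g) (@perm_inj _ g)) /=.
  apply: eq_big => [k|k _]; first by rewrite orb_actE.
  by rewrite !(Au g gG).
- move=> i j jo; rewrite (orbit_mutateE Z).
  case: ifP => [_|/norP[io jo']]; first by rewrite Ze ?oppr0.
  rewrite (Ze i j jo) add0r; apply: big1 => k ko.
  case: (eqVneq i j) => [<-|ij].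
    by apply: fm0; apply: (skew_sign dpos).
  case/imsetP: jo ij => g gG -> ij.
  have gt1 : (1 < #|gorbit G i|)%N.
    apply/card_gt1P; exists i, (g i); split => //; first exact: orb_self.
    by apply/imsetP; exists g.
  have le1 : (#|o| <= 1)%N.
    rewrite leqNgt; apply/negP => h.
    move: io; rewrite /o (amo x i h gt1) orb_self.
    by [].
  have [-> gx] := orb_fixed le1 gG ko.
  rewrite -(Au g gG i x) gx.
  by apply: fm0; apply: (skew_sign dpos).
Qed.

Lemma Inv_seq (Q : finType) (d : Q -> nat) (G : {group {perm Q}}) :
  (forall i, (0 < d i)%N) -> at_most_one_nontrivial_orbit G ->
  forall t B, (forall o, o \in t -> is_gorbit G o) -> Inv d B G ->
  Inv d (orbit_mutate_seq t B) G.
Proof.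
move=> dpos amo; elim => [|o t IH] B //= Ho HB.
rewrite /orbit_mutate_seq /=; apply: IH.
  by move=> o' h; apply: Ho; rewrite inE h orbT.
have [x ->] : is_gorbit G o by apply: Ho; rewrite inE eqxx.
exact: Inv_mut.
Qed.

Lemma Inv_adm (Q : finType) (d : Q -> nat) (G : {group {perm Q}}) B :
  (forall i, (0 < d i)%N) -> at_most_one_nontrivial_orbit G -> Inv d B G ->
  admissible B G.
Proof.
move=> dpos amo [Sk [Au Ze]]; split => // i j jo ij.
split; first by rewrite Ze.
case=> k [h1 h2].
have gt1 : (1 < #|gorbit G i|)%N.
  by apply/card_gt1P; exists i, j; split => //; apply: orb_self.
case: (boolP (k \in gorbit G i)) => ki.
  by move: h1; rewrite Ze.
have le1 : (#|gorbit G k| <= 1)%N.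
  rewrite leqNgt; apply/negP => h.
  by move: ki; rewrite -(amo k i h gt1) orb_self.
case/imsetP: jo ij h2 => g gG -> _ h2.
have [_ gk] := orb_fixed le1 gG (orb_self G k).
have := skew_sign dpos (g i) k Sk.
rewrite -{1}gk (Au g gG).
nia.
Qed.

Theorem mainTheorem12 (Q : finType) (A : qmat Q) (G : {group {perm Q}}) :
  skew_symmetrizable A -> admissible A G -> at_most_one_nontrivial_orbit G ->
  stable A G.
Proof.
move=> [d [dpos Sk]] [Au Ad] amo s Hs m _.
apply: (Inv_adm dpos amo); apply: (Inv_seq dpos amo).
  by move=> o h; apply: Hs; apply: mem_take h.
split; [exact: Sk | split; first exact: Au].
move=> i j jo; case: (eqVneq i j) => [<-|ij].
  exact: (skew_diag dpos).
have [h1 _] := Ad i j jo ij.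
have ji : j != i by rewrite eq_sym.
have [h2 _] := Ad j i (orb_sym jo) ji.
have := Sk i j; have := dpos i; have := dpos j; nia.
Qed.
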